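(* Let $f_0$ be a continuous probability density on $\mathbb{R}$ with $f_0(-z)=f_0(z)$ for all $z$, and let $F_0(x)=\int_{-\infty}^x f_0(z)\,dz$. For $\alpha>0,\theta>0$ let $g(\theta\mid\alpha)=\alpha f_0(\alpha\theta)$. Assume: (a) for all $0<\alpha_1<\alpha_2$, the ratio $g(\theta\mid\alpha_2)/g(\theta\mid\alpha_1)$ is strictly monotone in $\theta\in(0,\infty)$ (strict monotone likelihood ratio); (b) for all $0<\alpha_1<\alpha_2$, the function $\theta\mapsto \log\frac{g(\theta\mid\alpha_2)}{g(\theta\mid\alpha_1)}$ is convex on $(0,\infty)$. Let $X$ have density $\frac1\sigma f_0\big(\frac{x-\mu}{\sigma}\big)$, $\mu\in\mathbb{R}$, $\sigma>0$. Then: (i) for each $c>1$ the equation $$\frac{f_0\big(\frac{c}{c+1}\theta\big)}{f_0\big(\frac{c}{c-1}\theta\big)} = \frac{c+1}{c-1}$$ has a unique root $\theta=\theta(c)>0$; (ii) $\theta(c)$ is continuous in $c\in(1,\infty)$; (iii) for every $c>1$, $$\inf_{\mu\in\mathbb{R},\,\sigma>0} P_{\mu,\sigma}\big(X-c|X|\le\mu\le X+c|X|\big) = \psi(c) := F_0\Big(\frac{c}{c+1}\theta(c)\Big)+1-F_0\Big(\frac{c}{c-1}\theta(c)\Big);$$ (iv) $\psi(c)$ is continuous in $c\in(1,\infty)$. *)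

(* Defs.v *)
From HB Require Import structures.
From mathcomp Require Import all_boot all_order all_algebra.
From mathcomp Require Import all_classical all_reals all_analysis.
Set Implicit Arguments. Unset Strict Implicit. Unset Printing Implicit Defensive.
Import Order.TTheory GRing.Theory Num.Theory.
Import numFieldNormedType.Exports.
Local Open Scope classical_set_scope.
Local Open Scope ring_scope.

Definition strictly_monotone_pos {R : realType} (h : R -> R) : Prop :=
  (forall x y : R, 0 < x -> x < y -> h x < h y) \/
  (forall x y : R, 0 < x -> x < y -> h y < h x).

Definition convex_pos {R : realType} (h : R -> R) : Prop :=
  forall (x y t : R), 0 < x -> 0 < y -> 0 <= t -> t <= 1 ->
    h (t * x + (1 - t) * y) <= t * h x + (1 - t) * h y.

Definition cdf_of {R : realType} (f0 : R -> R) (x : R) : R :=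
  Rintegral (@lebesgue_measure R) `]-oo, x] f0.

Definition gscale {R : realType} (f0 : R -> R) (theta alpha : R) : R :=
  alpha * f0 (alpha * theta).

Definition cover_set {R : realType} (c mu : R) : set R :=
  [set x : R | x - c * `|x| <= mu <= x + c * `|x|].

Definition cover_prob {R : realType} (f0 : R -> R) (c mu sigma : R) : \bar R :=
  \int[@lebesgue_measure R]_(x in cover_set c mu) (f0 ((x - mu) / sigma) / sigma)%:E.

(* Main.v *)
Require Import Defs.
From HB Require Import structures.
From mathcomp Require Import all_boot all_order all_algebra.
From mathcomp Require Import all_classical all_reals all_analysis.
From mathcomp Require Import measurable_realfun.
From mathcomp Require Import ring lra.
Import Order.TTheory GRing.Theory Num.Theory.
Import numFieldNormedType.Exports.
Local Open Scope classical_set_scope.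
Local Open Scope ring_scope.

Lemma key_pos {R : realType} (c m x : R) : 1 < c -> 0 < m ->
  (x - c * `|x| <= m <= x + c * `|x|) = (x <= - m / (c - 1)) || (m / (c + 1) <= x).
Proof.
move=> c1 m0.
have c1' : 0 < c - 1 by rewrite subr_gt0.
have c2 : 0 < c + 1 by lra.
rewrite ler_pdivlMr// ler_pdivrMr//.
case: (lerP 0 x) => hx; [rewrite ger0_norm // | rewrite ltr0_norm //].
- apply/idP/idP => [/andP[h1 h2]|/orP[h|h]]; first (apply/orP; right; nra).
  + nra.
  + apply/andP; split; nra.
- apply/idP/idP => [/andP[h1 h2]|/orP[h|h]]; first (apply/orP; left; nra).
  + apply/andP; split; nra.
  + nra.
Qed.

Lemma key_neg {R : realType} (c m x : R) : 1 < c -> m < 0 ->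
  (x - c * `|x| <= m <= x + c * `|x|) = (x <= m / (c + 1)) || (- m / (c - 1) <= x).
Proof.
move=> c1 m0.
have c1' : 0 < c - 1 by rewrite subr_gt0.
have c2 : 0 < c + 1 by lra.
rewrite ler_pdivlMr// ler_pdivrMr//.
case: (lerP 0 x) => hx; [rewrite ger0_norm // | rewrite ltr0_norm //].
- apply/idP/idP => [/andP[h1 h2]|/orP[h|h]]; first (apply/orP; right; nra).
  + nra.
  + apply/andP; split; nra.
- apply/idP/idP => [/andP[h1 h2]|/orP[h|h]]; first (apply/orP; left; nra).
  + apply/andP; split; nra.
  + nra.
Qed.

Definition hfun {R : realType} (f0 : R -> R) (c t : R) :=
  cdf_of f0 (c / (c + 1) * t) + 1 - cdf_of f0 (c / (c - 1) * t).

Section Basics.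
Context {R : realType} (f0 : R -> R) (hcont : continuous f0)
  (hnonneg : forall z : R, 0 <= f0 z)
  (hint : (\int[@lebesgue_measure R]_z (f0 z)%:E = 1)%E).
Let mu := @lebesgue_measure R.

Lemma mf0 : measurable_fun setT f0.
Proof. exact: continuous_measurable_fun. Qed.

Lemma mEf0 (A : set R) : measurable_fun A (fun x => (f0 x)%:E).
Proof. by apply/measurable_EFinP; apply: measurable_funTS; exact: mf0. Qed.

Lemma intf0 (A : set R) : measurable A -> mu.-integrable A (EFin \o f0).
Proof.
move=> mA; apply: (@integrableS _ _ _ mu setT A) => //.
apply/integrableP; split; first exact: mEf0.
under eq_integral => x _ do rewrite gee0_abs ?lee_fin//.
by rewrite hint ltry.
Qed.

Lemma FE x : ((cdf_of f0 x)%:E = \int[mu]_(t in `]-oo, x]) (f0 t)%:E)%E.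
Proof.
rewrite /cdf_of /Rintegral fineK//.
by apply: integrable_fin_num => //; exact: intf0.
Qed.

Lemma sub_le1 (A : set R) : measurable A -> (\int[mu]_(t in A) (f0 t)%:E <= 1)%E.
Proof.
move=> mA; rewrite -hint; apply: ge0_subset_integral => //.
- exact: mEf0.
- by move=> x _; rewrite lee_fin.
Qed.

Lemma F_ge0 x : 0 <= cdf_of f0 x.
Proof. by rewrite -lee_fin FE integral_ge0// => t _; rewrite lee_fin. Qed.

Lemma F_le1 x : cdf_of f0 x <= 1.
Proof. by rewrite -lee_fin FE sub_le1. Qed.

Lemma F_mono x y : x <= y -> cdf_of f0 x <= cdf_of f0 y.
Proof.
move=> xy; rewrite -lee_fin !FE; apply: ge0_subset_integral => //.
- exact: mEf0.
- by move=> t _; rewrite lee_fin.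
- by apply: subset_itvl; rewrite bnd_simp.
Qed.

Lemma F_derive (x : R) : is_derive x 1 (cdf_of f0) (f0 x).
Proof.
have := @continuous_FTC1 R f0 (BInfty _ true) x (x + 1).
move=> /(_ _ _ _ (hcont x)) [].
- by rewrite ltrDl.
- exact: intf0.
- by rewrite ltNyr.
move=> d e; rewrite -e derive1E; exact: derivableP d.
Qed.

Lemma FE' (x : R) : ((cdf_of f0 x)%:E = \int[mu]_(t in `]-oo, x[) (f0 t)%:E)%E.
Proof. by rewrite FE integral_itv_bndo_bndc//; exact: mEf0. Qed.

Lemma tailE (x : R) : (\int[mu]_(t in `[x, +oo[) (f0 t)%:E = (1 - cdf_of f0 x)%:E)%E.
Proof.
have := hint; rewrite -(itv_setU_setT true x) ge0_integral_setU//=.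
- rewrite -FE' => h; rewrite EFinB -h addeAC subee ?add0e//.
- exact: mEf0.
- by move=> t _; rewrite lee_fin.
- rewrite disj_set2E; apply/eqP; rewrite -subset0 => t [] /=.
  by rewrite !in_itv /= andbT => /lt_le_trans h /h; rewrite ltxx.
Qed.

Lemma symF (x : R) (hsym : forall z : R, f0 (- z) = f0 z) :
  cdf_of f0 (- x) = 1 - cdf_of f0 x.
Proof.
apply/eqP; rewrite -eqe FE -tailE; apply/eqP.
rewrite ge0_integration_by_substitutionNy.
- by apply: eq_integral => t _ /=; rewrite hsym.
- exact: continuous_subspaceT.
- by move=> t _.
Qed.

Lemma affine_der (m s z : R) : is_derive z 1 (fun y : R => m + s * y) s.
Proof.
by apply: is_derive_eq; rewrite add0r mul1r [_%:A]mulr1.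
Qed.

Lemma affine_der1 (m s : R) : (fun y : R => m + s * y)^`()%classic = fun=> s.
Proof. by apply/funext => z; rewrite derive1E (@derive_val _ _ _ _ _ _ _ (affine_der m s z)). Qed.

Lemma G_cont (m s : R) : continuous (fun x : R => f0 ((x - m) / s) / s).
Proof.
move=> x; apply: cvgMl.
apply: (@continuous_comp _ _ _ (fun x : R => (x - m) / s) f0); last exact: hcont.
apply: cvgMl; apply: cvgB; [exact: cvg_id|exact: cvg_cst].
Qed.

Lemma lowerE (m s A : R) : 0 < s ->
  (\int[mu]_(x in `]-oo, A]) (f0 ((x - m) / s) / s)%:E
   = (cdf_of f0 ((A - m) / s))%:E)%E.
Proof.
move=> s0; set b := (A - m) / s.
have -> : A = (fun y => m + s * y) b by rewrite /b /= mulrC divfK ?gt_eqF// addrC subrK.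
rewrite (@increasing_ge0_integration_by_substitutionNy _ (fun y => m + s * y)).
- rewrite FE; apply: eq_integral => z _; rewrite affine_der1 /=.
  by rewrite !fctE /= [m + _]addrC addrK [s * z]mulrC mulfK ?gt_eqF// divfK ?gt_eqF.
- by move=> x y _ _ xy /=; rewrite ltrD2l ltr_pM2l.
- by rewrite affine_der1 => x _; exact: cvg_cst.
- by rewrite affine_der1; exact: is_cvg_cst.
- by rewrite affine_der1; exact: cvg_cst.
- split.
  + by move=> x _; exact: (@ex_derive _ _ _ _ _ _ _ (affine_der m s x)).
  + apply: cvg_at_left_filter; apply: cvgD; first exact: cvg_cst.
    apply: cvgMr; exact: cvg_id.
- apply/cvgrNyPle => M; near=> x.
  rewrite -lerBrDl -ler_pdivlMl//.
- exact/continuous_subspaceT/G_cont.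
- by move=> x _; rewrite divr_ge0// ltW.
Unshelve. all: end_near. Qed.

Lemma upperE (m s B : R) : 0 < s ->
  (\int[mu]_(x in `[B, +oo[) (f0 ((x - m) / s) / s)%:E
   = (1 - cdf_of f0 ((B - m) / s))%:E)%E.
Proof.
move=> s0; set b := (B - m) / s.
have -> : B = (fun y => m + s * y) b by rewrite /b /= mulrC divfK ?gt_eqF// addrC subrK.
rewrite (@increasing_ge0_integration_by_substitutiony _ (fun y => m + s * y)).
- rewrite -tailE; apply: eq_integral => z _; rewrite affine_der1 /=.
  by rewrite !fctE /= [m + _]addrC addrK [s * z]mulrC mulfK ?gt_eqF// divfK ?gt_eqF.
- by move=> x y _ _ xy /=; rewrite ltrD2l ltr_pM2l.
- by rewrite affine_der1 => x _; exact: cvg_cst.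
- by rewrite affine_der1; exact: is_cvg_cst.
- by rewrite affine_der1; exact: is_cvg_cst.
- split.
  + by move=> x _; exact: (@ex_derive _ _ _ _ _ _ _ (affine_der m s x)).
  + apply: cvg_at_right_filter; apply: cvgD; first exact: cvg_cst.
    apply: cvgMr; exact: cvg_id.
- apply/cvgryPge => M; near=> x.
  rewrite -lerBlDl -ler_pdivrMl//.
- exact/continuous_subspaceT/G_cont.
- by move=> x _; rewrite divr_ge0// ltW.
Unshelve. all: end_near. Qed.

Lemma cover_split (c m s A B : R) : 0 < s -> A < B ->
  cover_set c m = `]-oo, A] `|` `[B, +oo[ ->
  cover_prob f0 c m s = (cdf_of f0 ((A - m) / s) + 1 - cdf_of f0 ((B - m) / s))%:E.
Proof.
move=> s0 AB E; rewrite /cover_prob E ge0_integral_setU//=.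
- by rewrite lowerE// upperE// -EFinD addrA.
- apply/measurable_EFinP; apply: measurable_funTS.
  exact: continuous_measurable_fun (G_cont m s).
- by move=> x _; rewrite lee_fin divr_ge0// ltW.
- rewrite disj_set2E; apply/eqP; rewrite -subset0 => t [] /=.
  rewrite !in_itv /= andbT => tA Bt.
  by have := lt_le_trans (le_lt_trans tA AB) Bt; rewrite ltxx.
Qed.

Lemma cover_pos (c m : R) : 1 < c -> 0 < m -> cover_set c m = `]-oo, - m / (c - 1)] `|` `[m / (c + 1), +oo[.
Proof.
move=> c1 m0; apply/seteqP; split => x /=; rewrite /cover_set /= key_pos// !in_itv/= andbT.
- by move=> /orP.
- by move=> h; apply/orP.
Qed.

Lemma cover_neg (c m : R) : 1 < c -> m < 0 -> cover_set c m = `]-oo, m / (c + 1)] `|` `[- m / (c - 1), +oo[.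
Proof.
move=> c1 m0; apply/seteqP; split => x /=; rewrite /cover_set /= key_neg// !in_itv/= andbT.
- by move=> /orP.
- by move=> h; apply/orP.
Qed.

Lemma cover_zero (c s : R) : 1 < c -> 0 < s -> cover_prob f0 c 0 s = 1%E.
Proof.
move=> c1 s0.
have E : cover_set c 0 = `]-oo, 0[ `|` `[0, +oo[.
  rewrite itv_setU_setT; apply/seteqP; split => x //= _.
  rewrite /cover_set /=; case: (lerP 0 x) => hx; [rewrite ger0_norm // | rewrite ltr0_norm //].
  + by apply/andP; split; nra.
  + by apply/andP; split; nra.
rewrite /cover_prob E ge0_integral_setU//=.
- rewrite integral_itv_bndo_bndc; last first.
    apply/measurable_EFinP; apply: measurable_funTS.
    exact: continuous_measurable_fun (G_cont 0 s).
  by rewrite lowerE// upperE// -EFinD addrC subrK.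
- apply/measurable_EFinP; apply: measurable_funTS.
  exact: continuous_measurable_fun (G_cont 0 s).
- by move=> x _; rewrite lee_fin divr_ge0// ltW.
- rewrite disj_set2E; apply/eqP; rewrite -subset0 => t [] /=.
  rewrite !in_itv /= andbT => tA Bt.
  by have := lt_le_trans tA Bt; rewrite ltxx.
Qed.

Lemma cover_h (hsym : forall z : R, f0 (- z) = f0 z) (c m s : R) : 1 < c -> 0 < s ->
  cover_prob f0 c m s = (hfun f0 c (`|m| / s))%:E.
Proof.
move=> c1 s0.
have c1' : 0 < c - 1 by rewrite subr_gt0.
have c2 : 0 < c + 1 by lra.
have [m0|m0|->] := ltgtP m 0.
- rewrite (@cover_split c m s _ _ s0 _ (@cover_neg c m c1 m0))//; last first.
    rewrite (@lt_trans _ _ 0)// ?pmulr_llt0 ?pmulr_rgt0 ?invr_gt0// oppr_gt0//.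
  rewrite /hfun ltr0_norm//; congr (cdf_of f0 _ + 1 - cdf_of f0 _)%:E.
  + by field; rewrite ?gt_eqF// ?lt_eqF.
  + by field; rewrite ?gt_eqF// ?lt_eqF.
- rewrite (@cover_split c m s _ _ s0 _ (@cover_pos c m c1 m0))//; last first.
    rewrite (@lt_trans _ _ 0)// ?pmulr_rgt0 ?invr_gt0// mulNr oppr_lt0 pmulr_rgt0// invr_gt0//.
  rewrite /hfun gtr0_norm//.
  have -> : (- m / (c - 1) - m) / s = - (c / (c - 1) * (m / s)).
    by field; rewrite ?gt_eqF// ?lt_eqF.
  have -> : (m / (c + 1) - m) / s = - (c / (c + 1) * (m / s)).
    by field; rewrite ?gt_eqF// ?lt_eqF.
  rewrite !symF//; congr EFin; lra.
- by rewrite cover_zero// /hfun normr0 mul0r !mulr0 addrAC subrr add0r.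
Qed.
End Basics.

Definition Dfun {R : realType} (f0 : R -> R) (c t : R) :=
  c / (c - 1) * f0 (c / (c - 1) * t) - c / (c + 1) * f0 (c / (c + 1) * t).

Lemma scale_der {R : realType} (k z : R) : is_derive z 1 (fun y : R => k * y) k.
Proof. by apply: is_derive_eq; rewrite [_%:A]mulr1. Qed.

Lemma ab_pos {R : realType} (c : R) : 1 < c -> 0 < c / (c + 1) /\ c / (c + 1) < c / (c - 1).
Proof.
move=> c1; have c0 : 0 < c by lra.
have c1' : 0 < c - 1 by lra.
have c2 : 0 < c + 1 by lra.
split; first by rewrite divr_gt0.
by rewrite ltr_pM2l// ltf_pV2// ?posrE//; lra.
Qed.

Section Anal.
Context {R : realType} (f0 : R -> R) (hcont : continuous f0)
  (hnonneg : forall z : R, 0 <= f0 z)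
  (hint : (\int[@lebesgue_measure R]_z (f0 z)%:E = 1)%E)
  (hMLR : forall a1 a2 : R, 0 < a1 -> a1 < a2 ->
     strictly_monotone_pos (fun th => gscale f0 th a2 / gscale f0 th a1)).

Lemma f0_pos z : 0 < z -> 0 < f0 z.
Proof.
move=> z0; rewrite lt_def hnonneg andbT; apply/negP => /eqP fz.
have h12 : (1 : R) < 2 by lra.
have z2 : 0 < z / 2 by lra.
have zz : z / 2 < z by lra.
have E1 : gscale f0 (z / 2) 2 / gscale f0 (z / 2) 1 = 0.
  rewrite /gscale [X in f0 X](_ : _ = z); last by lra.
  by rewrite fz mulr0 mul0r.
have E2 : gscale f0 z 2 / gscale f0 z 1 = 0.
  by rewrite /gscale !mul1r fz invr0 mulr0.
case: (hMLR 1 2 ltr01 h12) => H; have := H _ _ z2 zz; rewrite E1 E2 ltxx //.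
Qed.

Lemma h_der (c t : R) : is_derive t 1 (hfun f0 c) (- Dfun f0 c t).
Proof.
set a := c / (c + 1); set b := c / (c - 1).
have da : is_derive t 1 (cdf_of f0 \o (fun y => a * y)) (f0 (a * t) * a).
  exact: is_derive1_comp (@F_derive _ f0 hcont hnonneg hint _) (scale_der a t).
have db : is_derive t 1 (cdf_of f0 \o (fun y => b * y)) (f0 (b * t) * b).
  exact: is_derive1_comp (@F_derive _ f0 hcont hnonneg hint _) (scale_der b t).
have := is_deriveB (is_deriveD da (is_derive_cst (1 : R) t 1)) db.
move=> H; apply: is_derive_eq; rewrite /Dfun -/a -/b; ring.
Qed.

Lemma h_cont (c : R) : continuous (hfun f0 c).
Proof.
move=> t; apply: differentiable_continuous; apply/derivable1_diffP.
exact: (@ex_derive _ _ _ _ _ _ _ (h_der c t)).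
Qed.

Lemma D_cont (c : R) : continuous (Dfun f0 c).
Proof.
move=> t; apply: cvgB; apply: cvgMr; apply: continuous_comp; try exact: hcont;
  apply: cvgMr; exact: cvg_id.
Qed.

Lemma h_mvt (c t1 t2 : R) : t1 < t2 ->
  exists2 x, t1 < x < t2 & hfun f0 c t2 - hfun f0 c t1 = - Dfun f0 c x * (t2 - t1).
Proof.
move=> t12; have [x] := @MVT R (hfun f0 c) (fun x => - Dfun f0 c x) t1 t2 t12 (fun x _ => h_der c x)
  (continuous_subspaceT (h_cont c)).
by rewrite in_itv /= => hx E; exists x.
Qed.

Lemma h0 (c : R) : hfun f0 c 0 = 1.
Proof. by rewrite /hfun !mulr0 addrAC subrr add0r. Qed.

Lemma h_le1 (c t : R) : 1 < c -> 0 <= t -> hfun f0 c t <= 1.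
Proof.
move=> c1 t0; have [a0 ab] := @ab_pos R c c1.
rewrite /hfun; have : cdf_of f0 (c / (c + 1) * t) <= cdf_of f0 (c / (c - 1) * t).
  by apply: (@F_mono _ f0 hcont hnonneg hint); rewrite ler_wpM2r// ltW.
lra.
Qed.


Lemma claimA (c s : R) : 1 < c -> 0 < s -> ~ (forall t, 0 < t -> t < s -> Dfun f0 c t < 0).
Proof.
move=> c1 s0 H; have [x /andP[x0 xs] E] := @h_mvt c 0 s s0.
have := H x x0 xs; have := @h_le1 c s c1 (ltW s0); rewrite h0 in E.
nra.
Qed.

Lemma claimB (c s0 : R) : 1 < c -> 0 <= s0 -> ~ (forall t, s0 < t -> 0 < Dfun f0 c t).
Proof.
move=> c1 s00 H.
have [a0 ab] := @ab_pos R c c1.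
set a := c / (c + 1) in a0 ab; set b := c / (c - 1) in ab.
have hdec u v : s0 < u -> u < v -> hfun f0 c v < hfun f0 c u.
  move=> su uv; have [x /andP[ux xv] E] := @h_mvt c u v uv.
  have := H x (lt_trans su ux); nra.
set t0 := s0 + 1; set t1 := s0 + 1 / 2.
have ht1 : hfun f0 c t1 <= 1 by apply: h_le1 => //; rewrite /t1; lra.
have ht0 : hfun f0 c t0 < 1.
  apply: (lt_le_trans (hdec t1 t0 _ _)) => //; rewrite /t1 /t0; lra.
set d := 1 - hfun f0 c t0.
have d0 : 0 < d by rewrite /d; lra.
have hle u : t0 <= u -> hfun f0 c u <= 1 - d.
  rewrite /d le_eqVlt => /orP[/eqP<-|tu]; first lra.
  have := hdec t0 u _ tu; rewrite /t0; lra.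
set q := b / a.
have q1 : 1 <= q by rewrite /q ler_pdivlMr// mul1r ltW.
have aq n : a * (t0 * q ^+ n.+1) = b * (t0 * q ^+ n).
  rewrite exprS /q; field; rewrite gt_eqF//.
have P n : n%:R * d <= cdf_of f0 (a * (t0 * q ^+ n)).
  elim: n => [|n IH]; first by rewrite mul0r (@F_ge0 _ f0 hcont hnonneg hint).
  rewrite aq -natr1.
  have qn : 1 <= q ^+ n by exact: exprn_ege1.
  have t00 : 0 < t0 by rewrite /t0; lra.
  have := hle (t0 * q ^+ n); rewrite /hfun -/a -/b.
  move: IH; set u := t0 * q ^+ n => IH.
  have tu : t0 <= u by rewrite /u; nra.
  move=> /(_ tu); lra.
pose n := (Num.trunc (1 / d)).+1.
have := P n; have := @F_le1 _ f0 hcont hnonneg hint (a * (t0 * q ^+ n)).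
have := truncnS_gt (1 / d); rewrite -/n => hn.
have : 1 < n%:R * d by rewrite -ltr_pdivrMr.
lra.
Qed.

Lemma D_ivt (c x y : R) : 0 < x -> 0 < y -> Dfun f0 c x < 0 -> 0 < Dfun f0 c y ->
  exists t, 0 < t /\ Dfun f0 c t = 0.
Proof.
move=> x0 y0 Dx Dy.
have hv : Num.min (Dfun f0 c x) (Dfun f0 c y) <= 0 <= Num.max (Dfun f0 c x) (Dfun f0 c y).
  by rewrite ge_min le_max (ltW Dx) (ltW Dy) /= orbT.
have hv' : Num.min (Dfun f0 c y) (Dfun f0 c x) <= 0 <= Num.max (Dfun f0 c y) (Dfun f0 c x).
  by rewrite ge_min le_max (ltW Dx) (ltW Dy) /= orbT.
have [xy|yx] := lerP x y.
- have [t] := @IVT R (Dfun f0 c) x y 0 xy (continuous_subspaceT (D_cont c)) hv.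
  rewrite in_itv /= => /andP[xt _] Dt; exists t; split => //; lra.
- have [t] := @IVT R (Dfun f0 c) y x 0 (ltW yx) (continuous_subspaceT (D_cont c)) hv'.
  rewrite in_itv /= => /andP[yt _] Dt; exists t; split => //; lra.
Qed.

Lemma ratio_D (c t : R) : 1 < c -> 0 < t ->
  let r := gscale f0 t (c / (c - 1)) / gscale f0 t (c / (c + 1)) in
  ((r < 1) = (Dfun f0 c t < 0)) /\ ((1 < r) = (0 < Dfun f0 c t)) /\ ((r == 1) = (Dfun f0 c t == 0)).
Proof.
move=> c1 t0 r.
have [a0 ab] := @ab_pos R c c1.
have P : 0 < c / (c + 1) * f0 (c / (c + 1) * t) by rewrite mulr_gt0// f0_pos// mulr_gt0.
rewrite /r /gscale /Dfun; split; [|split].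
- by rewrite ltr_pdivrMr// mul1r subr_lt0.
- by rewrite ltr_pdivlMr// mul1r subr_gt0.
- move: P; set Pv := _ * f0 _; set B := _ * f0 _ => P.
  apply/eqP/eqP => [h|].
  + by rewrite -(divfK (lt0r_neq0 P) B) h mul1r subrr.
  + by move/eqP; rewrite subr_eq0 => /eqP ->; rewrite divff// gt_eqF.
Qed.

Lemma root_exists (c : R) : 1 < c -> exists t, 0 < t /\ Dfun f0 c t = 0.
Proof.
move=> c1; apply/not_existsP => nz.
have nz' t : 0 < t -> Dfun f0 c t != 0.
  by move=> t0; apply/eqP => Dt; apply: (nz t).
have [D1|D1|D1] := ltgtP (Dfun f0 c 1) 0.
- apply: (@claimA c 1 c1 ltr01) => t t0 _.
  rewrite ltNge le_eqVlt negb_or eq_sym nz' //=; apply/negP => Dt.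
  by have [u [u0 Du]] := @D_ivt c 1 t ltr01 t0 D1 Dt; apply: (nz u).
- apply: (@claimB c 0 c1 (lexx _)) => t t0.
  rewrite ltNge le_eqVlt negb_or nz' //=; apply/negP => Dt.
  by have [u [u0 Du]] := @D_ivt c t 1 t0 ltr01 Dt D1; apply: (nz u).
- by apply: (nz 1); split.
Qed.

Lemma root_props (c : R) : 1 < c -> exists th, 0 < th /\ Dfun f0 c th = 0 /\
  (forall t, 0 < t -> t < th -> 0 < Dfun f0 c t) /\ (forall t, th < t -> Dfun f0 c t < 0).
Proof.
move=> c1; have [th [th0 Dth]] := @root_exists c c1.
have [a0 ab] := @ab_pos R c c1.
have rth : gscale f0 th (c / (c - 1)) / gscale f0 th (c / (c + 1)) = 1.
  by have [_ [_ E]] := @ratio_D c th c1 th0; apply/eqP; rewrite E Dth.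
exists th; split => //; split => //.
case: (hMLR _ _ a0 ab) => H.
- exfalso; apply: (@claimA c th c1 th0) => t t0 tth.
  have [E _] := @ratio_D c t c1 t0; rewrite -E -[X in _ < X]rth; exact: H.
- split.
  + move=> t t0 tth; have [_ [E _]] := @ratio_D c t c1 t0; rewrite -E -[X in X < _]rth; exact: H.
  + move=> t tht; have t0 := lt_trans th0 tht.
    have [E _] := @ratio_D c t c1 t0; rewrite -E -[X in _ < X]rth; exact: H.
Qed.

Lemma h_min (c th : R) : 1 < c -> 0 < th ->
  (forall t, 0 < t -> t < th -> 0 < Dfun f0 c t) -> (forall t, th < t -> Dfun f0 c t < 0) ->
  forall t, 0 <= t -> hfun f0 c th <= hfun f0 c t.
Proof.
move=> c1 th0 Hl Hr t t0.
have [tth|tht|->] := ltgtP t th.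
- have [x /andP[tx xth] E] := @h_mvt c t th tth.
  have := Hl x (le_lt_trans t0 tx) xth; nra.
- have [x /andP[thx xt] E] := @h_mvt c th t tht.
  have := Hr x thx; nra.
- by [].
Qed.

Lemma frac_cont (k c : R) : c + k != 0 -> {for c, continuous (fun c : R => c / (c + k))}.
Proof.
move=> ck; apply: cvgM; first exact: cvg_id.
by apply: cvgV => //; apply: cvgD; [exact: cvg_id|exact: cvg_cst].
Qed.

Lemma F_cont : continuous (cdf_of f0).
Proof.
move=> t; apply: differentiable_continuous; apply/derivable1_diffP.
exact: (@ex_derive _ _ _ _ _ _ _ (@F_derive _ f0 hcont hnonneg hint t)).
Qed.

Lemma Dc_cont (t c : R) : 1 < c -> {for c, continuous (fun c => Dfun f0 c t)}.
Proof.
move=> c1.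
have h1 : c + (- 1) != 0 by rewrite gt_eqF//; lra.
have h2 : c + 1 != 0 by rewrite gt_eqF//; lra.
rewrite /Dfun; apply: cvgB; apply: cvgM.
- exact: frac_cont.
- apply: continuous_comp; last exact: hcont.
  by apply: cvgMl; exact: frac_cont.
- exact: frac_cont.
- apply: continuous_comp; last exact: hcont.
  by apply: cvgMl; exact: frac_cont.
Qed.

Lemma theta_cont (theta : R -> R)
  (Ht : forall c, 1 < c -> 0 < theta c /\ Dfun f0 c (theta c) = 0 /\
    (forall t, 0 < t -> t < theta c -> 0 < Dfun f0 c t) /\
    (forall t, theta c < t -> Dfun f0 c t < 0)) (c : R) :
  1 < c -> {for c, continuous theta}.
Proof.
move=> c1; apply/cvgrPdist_lt => e e0.
have [th0 [_ [Hl Hr]]] := Ht c c1.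
set th := theta c in th0 Hl Hr *.
set ep := Num.min (e / 2) (th / 2).
have ep0 : 0 < ep by rewrite lt_min; apply/andP; split; lra.
have epe : ep <= e / 2 by rewrite ge_min lexx.
have epth : ep <= th / 2 by rewrite ge_min lexx orbT.
have D1 : 0 < Dfun f0 c (th - ep) by apply: Hl; lra.
have D2 : Dfun f0 c (th + ep) < 0 by apply: Hr; lra.
have n1 := cvgr_gt _ (@Dc_cont (th - ep) c c1) 0 D1.
have n2 := cvgr_lt _ (@Dc_cont (th + ep) c c1) 0 D2.
have n3 := @cvgr_gt _ _ _ _ id c cvg_id 1 c1.
near=> x.
have x1 : 1 < x by near: x; exact: n3.
have Dx1 : 0 < Dfun f0 x (th - ep) by near: x; exact: n1.
have Dx2 : Dfun f0 x (th + ep) < 0 by near: x; exact: n2.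
have [tx0 [Dtx [Hlx Hrx]]] := Ht x x1.
have lo : th - ep < theta x.
  rewrite ltNge le_eqVlt; apply/negP => /orP[/eqP E|lt].
  - by move: Dx1; rewrite -E Dtx ltxx.
  - by have := Hrx _ lt; lra.
have hi : theta x < th + ep.
  rewrite ltNge le_eqVlt; apply/negP => /orP[/eqP E|lt].
  - by move: Dx2; rewrite E Dtx ltxx.
  - by have := Hlx (th + ep) (ltac:(lra)) lt; lra.
rewrite ltr_norml; apply/andP; split; lra.
Unshelve. all: end_near. Qed.
End Anal.

Theorem theorem3p2 (R : realType) (f0 : R -> R)
  (hcont : continuous f0)
  (hnonneg : forall z : R, 0 <= f0 z)
  (hint : (\int[@lebesgue_measure R]_z (f0 z)%:E = 1)%E)
  (hsym : forall z : R, f0 (- z) = f0 z)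
  (hMLR : forall a1 a2 : R, 0 < a1 -> a1 < a2 ->
     strictly_monotone_pos (fun th => gscale f0 th a2 / gscale f0 th a1))
  (hconv : forall a1 a2 : R, 0 < a1 -> a1 < a2 ->
     convex_pos (fun th => ln (gscale f0 th a2 / gscale f0 th a1))) :
  exists theta : R -> R,
    (forall c : R, 1 < c ->
       0 < theta c /\
       f0 (c / (c + 1) * theta c) / f0 (c / (c - 1) * theta c) = (c + 1) / (c - 1) /\
       (forall t : R, 0 < t ->
          f0 (c / (c + 1) * t) / f0 (c / (c - 1) * t) = (c + 1) / (c - 1) ->
          t = theta c)) /\
    {within `]1, +oo[, continuous theta} /\
    (forall c : R, 1 < c ->
       ereal_inf [set p | exists mu sigma : R, 0 < sigma /\ p = cover_prob f0 c mu sigma]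
       = (cdf_of f0 (c / (c + 1) * theta c) + 1 - cdf_of f0 (c / (c - 1) * theta c))%:E) /\
    {within `]1, +oo[, continuous (fun c => cdf_of f0 (c / (c + 1) * theta c) + 1
                                           - cdf_of f0 (c / (c - 1) * theta c))}.
Proof.
have H c : exists th : R, 1 < c -> 0 < th /\ Dfun f0 c th = 0 /\
    (forall t, 0 < t -> t < th -> 0 < Dfun f0 c t) /\ (forall t, th < t -> Dfun f0 c t < 0).
  have [c1|c1] := boolP (1 < c); last by exists 0.
  have [th Hth] := root_props f0 hcont hnonneg hint hMLR c c1.
  by exists th.
have [theta Ht] := choice H.
exists theta; split; [|split; [|split]].
- move=> c c1; have [th0 [Dth [Hl Hr]]] := Ht c c1.
  have c1' : 0 < c - 1 by lra.
  have c2 : 0 < c + 1 by lra.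
  have c0 : 0 < c by lra.
  have [a0 ab] := @ab_pos R c c1.
  have fpos t : 0 < t -> 0 < f0 (c / (c - 1) * t).
    by move=> t0; apply: (f0_pos f0 hnonneg hMLR); rewrite mulr_gt0// (lt_trans a0 ab).
  split => //; split.
  + have := fpos _ th0; move: Dth; rewrite /Dfun.
    set A := f0 (_ / (c + 1) * _); set B := f0 (_ / (c - 1) * _) => Dth B0.
    have eA : A = (c + 1) / (c - 1) * B.
      transitivity (A + (c + 1) / c * (c / (c - 1) * B - c / (c + 1) * A)).
        by rewrite Dth mulr0 addr0.
      by field; rewrite ?gt_eqF// ?lt_eqF.
    by rewrite eA mulfK// gt_eqF.
  + move=> t t0; have := fpos _ t0.
    set A := f0 (_ / (c + 1) * _); set B := f0 (_ / (c - 1) * _) => B0 E.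
    have eA : A = (c + 1) / (c - 1) * B by rewrite -E divfK// gt_eqF.
    have Dt : Dfun f0 c t = 0.
      by rewrite /Dfun -/A -/B eA; field; rewrite ?gt_eqF// ?lt_eqF.
    have [tth|tht|//] := ltgtP t (theta c).
    * by have := Hl t t0 tth; rewrite Dt ltxx.
    * by have := Hr t tht; rewrite Dt ltxx.
- rewrite continuous_open_subspace; last exact: interval_open.
  move=> c c1; have {c1} c1 : 1 < c by move: c1; rewrite inE /= in_itv /= andbT.
  exact: (theta_cont f0 hcont theta Ht c c1).
- move=> c c1; have [th0 [Dth [Hl Hr]]] := Ht c c1.
  apply/eqP; rewrite eq_le; apply/andP; split.
  + apply: ereal_inf_lbound; exists (- theta c), 1; split => //.
    rewrite (cover_h f0 hcont hnonneg hint hsym)// normrN divr1 gtr0_norm//.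
  + apply: le_ereal_inf_tmp => _ [m [s [s0 ->]]].
    rewrite (cover_h f0 hcont hnonneg hint hsym)// lee_fin.
    apply: (h_min f0 hcont hnonneg hint c (theta c) c1 th0 Hl Hr).
    by rewrite divr_ge0// ltW.
- rewrite continuous_open_subspace; last exact: interval_open.
  move=> c c1; have {c1} c1 : 1 < c by move: c1; rewrite inE /= in_itv /= andbT.
  have h1 : c + (- 1) != 0 by rewrite gt_eqF//; lra.
  have h2 : c + 1 != 0 by rewrite gt_eqF//; lra.
  have tc := theta_cont f0 hcont theta Ht c c1.
  have k1 : {for c, continuous (fun x : R => x / (x + 1) * theta x)}.
    by apply: cvgM; [exact: frac_cont|exact: tc].
  have k2 : {for c, continuous (fun x : R => x / (x + (- 1)) * theta x)}.
    by apply: cvgM; [exact: frac_cont|exact: tc].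
  have F1 := continuous_comp k1 (F_cont f0 hcont hnonneg hint _).
  have F2 := continuous_comp k2 (F_cont f0 hcont hnonneg hint _).
  apply: cvgB; [apply: cvgD; [exact: F1|exact: cvg_cst]|exact: F2].
Qed.
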